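(* Let $\mathcal A_+,\mathcal A_-\subseteq\mathbb Z^n$ be disjoint finite sets, $\mathcal A=\mathcal A_+\cup\mathcal A_-$, with $\mathcal A_-\neq\varnothing$ and $\mathcal A_-\subseteq\operatorname{relint}(\operatorname{conv}(\mathcal A_+))$. Let $f\in\mathcal S(\mathcal A_+,\mathcal A_-)$ have nonsigned coefficients $c\in\mathbb R^{\mathcal A}_{>0}$, let $F$ be the critical system of $(\mathcal A_+,\mathcal A_-)$ and $h:\mathcal A\to\mathbb Z$ a height function lifting $\mathcal A_-$. Let $S:=\{t\in\mathbb R_{>0}: F(c\star t^h,x)=0\text{ for some }x\in\mathbb R^n_{>0}\}$. Then (i) $S$ has a minimum $t_*$, and (ii) $f$ is copositive if and only if $t_*\ge1$.
   Context: For disjoint finite $\mathcal A_+,\mathcal A_-\subseteq\mathbb R^n$, a signomial with signed support $(\mathcal A_+,\mathcal A_-)$ is a function $f:\mathbb R^n_{>0}\to\mathbb R$, $f(x)=\sum_{a\in\mathcal A_+}c_ax^a-\sum_{b\in\mathcal A_-}c_bx^b$ with all $c_a,c_b>0$ (the nonsigned coefficients). $\mathcal S(\mathcal A_+,\mathcal A_-)$ is the set of such signomials, identified with $\mathbb R^{\mathcal A}_{>0}$; $f_c$ denotes the signomial with nonsigned coefficients $c$. $f$ is copositive if $f\ge0$ on $\mathbb R^n_{>0}$. The critical system of $(\mathcal A_+,\mathcal A_-)$ is $F(c,x)=(f_c(x),x_1\partial_{x_1}f_c(x),\dots,x_n\partial_{x_n}f_c(x))$. A height function $h:\mathcal A\to\mathbb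 Z$ lifts $\mathcal A_-$ if $h(a)>0$ for $a\in\mathcal A_-$ and $h(a)=0$ for $a\in\mathcal A_+$; $c\star t^h=(c_at^{h(a)})_{a\in\mathcal A}$. *)

(* Defs.v *)
From HB Require Import structures.
From mathcomp Require Import all_boot all_order all_algebra.
From mathcomp Require Import all_classical all_reals all_analysis.
Set Implicit Arguments. Unset Strict Implicit. Unset Printing Implicit Defensive.
Import Order.TTheory GRing.Theory Num.Theory.
Import numFieldNormedType.Exports.
Local Open Scope classical_set_scope.
Local Open Scope ring_scope.

(* Exponent vectors live in Z^n, represented as 'rV[int]_n.
   Signed supports are finite duplicate-free lists Ap (= A_+), Am (= A_-). *)

Section Signomials.
Variables (R : realType) (n : nat).

Definition realvec (a : 'rV[int]_n) : 'rV[R]_n := map_mx (fun z : int => z%:~R) a.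

Definition monom (a : 'rV[int]_n) (x : 'rV[R]_n) : R :=
  \prod_(i < n) (x ord0 i) ^ (a ord0 i).

Definition signomial (Ap Am : seq 'rV[int]_n) (c : 'rV[int]_n -> R)
    (x : 'rV[R]_n) : R :=
  \sum_(a <- Ap) c a * monom a x - \sum_(b <- Am) c b * monom b x.

Definition positive_point (x : 'rV[R]_n) : Prop := forall i, 0 < x ord0 i.

Definition pos_coeffs (Ap Am : seq 'rV[int]_n) (c : 'rV[int]_n -> R) : Prop :=
  forall a, a \in Ap ++ Am -> 0 < c a.

Definition copositive (Ap Am : seq 'rV[int]_n) (c : 'rV[int]_n -> R) : Prop :=
  forall x, positive_point x -> 0 <= signomial Ap Am c x.

(* the critical system F(c,x) = (f_c(x), x_1 d_1 f_c(x), ..., x_n d_n f_c(x))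
   vanishes at (c,x) *)
Definition critical_zero (Ap Am : seq 'rV[int]_n) (c : 'rV[int]_n -> R)
    (x : 'rV[R]_n) : Prop :=
  signomial Ap Am c x = 0 /\
  forall i : 'I_n,
    x ord0 i * ('D_(delta_mx ord0 i) (signomial Ap Am c)) x = 0.

Definition lifts (Ap Am : seq 'rV[int]_n) (h : 'rV[int]_n -> int) : Prop :=
  (forall a, a \in Am -> 0 < h a) /\ (forall a, a \in Ap -> h a = 0).

Definition star_pow (c : 'rV[int]_n -> R) (t : R) (h : 'rV[int]_n -> int) :
  'rV[int]_n -> R := fun a => c a * t ^ (h a).

Definition conv_hull (A : seq 'rV[int]_n) : set 'rV[R]_n :=
  [set p | exists lam : 'rV[int]_n -> R,
     (forall a, a \in A -> 0 <= lam a) /\ \sum_(a <- A) lam a = 1 /\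
     p = \sum_(a <- A) lam a *: realvec a].

Definition aff_hull (A : seq 'rV[int]_n) : set 'rV[R]_n :=
  [set p | exists lam : 'rV[int]_n -> R,
     \sum_(a <- A) lam a = 1 /\ p = \sum_(a <- A) lam a *: realvec a].

Definition relint_conv (A : seq 'rV[int]_n) : set 'rV[R]_n :=
  [set p | conv_hull A p /\ exists2 eps : R, 0 < eps &
     forall y, aff_hull A y -> `|y - p| < eps -> conv_hull A y].

End Signomials.

(* Main.v *)
Require Import Defs.
From HB Require Import structures.
From mathcomp Require Import all_boot all_order all_algebra.
From mathcomp Require Import all_classical all_reals all_analysis.
From mathcomp Require Import lra ring zify.
Import Order.TTheory GRing.Theory Num.Theory.
Import numFieldNormedType.Exports.
Local Open Scope classical_set_scope.
Local Open Scope ring_scope.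
Set Implicit Arguments. Unset Strict Implicit. Unset Printing Implicit Defensive.


Section Basic.
Variables (R : realType) (n : nat).
Implicit Types (y x p : 'rV[R]_n).

Definition dotr p y : R := \sum_(k < n) p ord0 k * y ord0 k.
Definition ex y : 'rV[R]_n := \row_k expR (y ord0 k).
Definition lnv x : 'rV[R]_n := \row_k ln (x ord0 k).

Lemma monom_ex a y : monom a (ex y) = expR (dotr (realvec R a) y).
Proof.
rewrite /monom /dotr expR_sum; apply: eq_bigr => k _; rewrite !mxE.
by rewrite mulrC expRM powR_intmul // expR_ge0.
Qed.

Lemma ex_lnv x : positive_point x -> ex (lnv x) = x.
Proof. by move=> px; apply/rowP => k; rewrite !mxE lnK // posrE. Qed.

Lemma ex_pos y : positive_point (ex y).
Proof. by move=> k; rewrite mxE expR_gt0. Qed.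

End Basic.

Section Dot.
Variables (R : realType) (n : nat).
Implicit Types (y z p q : 'rV[R]_n).

Lemma dotrDl p q y : dotr (p + q) y = dotr p y + dotr q y.
Proof. by rewrite /dotr -big_split; apply: eq_bigr => k _; rewrite mxE mulrDl. Qed.
Lemma dotrZl s p y : dotr (s *: p) y = s * dotr p y.
Proof. by rewrite /dotr mulr_sumr; apply: eq_bigr => k _; rewrite mxE mulrA. Qed.
Lemma dotrNl p y : dotr (- p) y = - dotr p y.
Proof. by rewrite -scaleN1r dotrZl mulN1r. Qed.
Lemma dotrBl p q y : dotr (p - q) y = dotr p y - dotr q y.
Proof. by rewrite dotrDl dotrNl. Qed.
Lemma dotr0l y : dotr 0 y = 0.
Proof. by rewrite /dotr big1 // => k _; rewrite mxE mul0r. Qed.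
Lemma dotrC p y : dotr p y = dotr y p.
Proof. by apply: eq_bigr => k _; rewrite mulrC. Qed.
Lemma dotrDr p y z : dotr p (y + z) = dotr p y + dotr p z.
Proof. by rewrite !(dotrC p) dotrDl. Qed.
Lemma dotrBr p y z : dotr p (y - z) = dotr p y - dotr p z.
Proof. by rewrite !(dotrC p) dotrBl. Qed.
Lemma dotrZr s p y : dotr p (s *: y) = s * dotr p y.
Proof. by rewrite !(dotrC p) dotrZl. Qed.
Lemma dotr0r p : dotr p 0 = 0.
Proof. by rewrite dotrC dotr0l. Qed.
Lemma dotr_suml (T : Type) (r : seq T) (F : T -> 'rV[R]_n) y :
  dotr (\sum_(i <- r) F i) y = \sum_(i <- r) dotr (F i) y.
Proof.
elim: r => [|a r IH]; first by rewrite !big_nil dotr0l.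
by rewrite !big_cons dotrDl IH.
Qed.

Lemma dotr_self p : `|p| ^+ 2 <= dotr p p.
Proof.
have hge : 0 <= dotr p p by apply: sumr_ge0 => k _; rewrite -expr2 sqr_ge0.
have -> : `|p| = mx_norm p by [].
have [p0|] := eqVneq (mx_norm p) 0.
  by rewrite p0 expr0n.
move=> /mx_norm_neq0 [[i j] /= pij].
rewrite pij real_normK ?num_real // (ord1 i) /dotr (bigD1 j) //= expr2.
rewrite lerDl; apply: sumr_ge0 => k _; rewrite -expr2 sqr_ge0 //.
Qed.

End Dot.


Section Der.
Variable R : realType.

Lemma der_prod (I : Type) (r : seq I) (F : I -> R -> R) (t : R) :
  (forall i, derivable (F i) t 1) -> derivable (fun s => \prod_(i <- r) F i s) t 1.
Proof.
move=> HF; elim: r => [|a r IH].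
  by under eq_fun do rewrite big_nil; apply: derivable_cst.
under eq_fun do rewrite big_cons.
exact: (derivableM (HF a) IH).
Qed.

Lemma der_sum (I : Type) (r : seq I) (F : I -> R -> R) (t : R) :
  (forall i, derivable (F i) t 1) -> derivable (fun s => \sum_(i <- r) F i s) t 1.
Proof.
move=> HF; elim: r => [|a r IH].
  by under eq_fun do rewrite big_nil; apply: derivable_cst.
under eq_fun do rewrite big_cons.
exact: (derivableD (HF a) IH).
Qed.

Lemma der_aff (al be t : R) : derivable (fun s : R => s * al + be) t 1.
Proof.
have dM : derivable ((id : R -> R) * cst al) t 1.
  apply: derivableM; [exact: derivable_id | exact: derivable_cst].
exact: derivableD dM (derivable_cst be t 1).
Qed.

Lemma der_affpow (al be t : R) (z : int) : t * al + be != 0 ->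
  derivable (fun s : R => (s * al + be) ^ z) t 1.
Proof.
move=> nz; case: z => m.
  have := @derivableX _ _ _ m _ _ (@der_aff al be t); rewrite exprfctE.
  by [].
have := @derivableX _ _ _ m.+1 _ _ (@der_aff al be t); rewrite exprfctE => d.
by apply: (derivableV _ d); rewrite expf_neq0.
Qed.


Lemma der_sig (n : nat) (Ap Am : seq 'rV[int]_n) (c : 'rV[int]_n -> R)
  (x v : 'rV[R]_n) (t : R) : positive_point (t *: v + x) ->
  derivable (fun s : R => signomial Ap Am c (s *: v + x)) t 1.
Proof.
move=> pp.
have dm a : derivable (fun s : R => c a * monom a (s *: v + x)) t 1.
  apply: (@derivableM _ _ (cst (c a)) (fun s : R => monom a (s *: v + x)));
    first exact: derivable_cst.
  rewrite /monom; apply: der_prod => k.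
  under eq_fun do rewrite !mxE.
  apply: der_affpow; have := pp k; rewrite !mxE => /gt_eqF ->.
  by [].
apply: (@derivableB _ _ _ (fun s : R => \sum_(a <- Ap) c a * monom a (s *: v + x))
  (fun s : R => \sum_(b <- Am) c b * monom b (s *: v + x))); exact: der_sum.
Qed.


Lemma crit_min (n : nat) (Ap Am : seq 'rV[int]_n) (c : 'rV[int]_n -> R)
  (x : 'rV[R]_n) (i : 'I_n) : positive_point x ->
  (forall z, positive_point z -> signomial Ap Am c x <= signomial Ap Am c z) ->
  'D_(delta_mx ord0 i) (signomial Ap Am c) x = 0.
Proof.
move=> px hmin.
set v := delta_mx ord0 i; set f := signomial Ap Am c.
pose g (s : R) := f (s *: v + x).
have -> : 'D_v f x = 'D_1 g 0.
  have E : (fun h : R => h^-1 *: ((f \o shift x) (h *: v) - f x)) =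
      (fun h : R => h^-1 *: ((g \o shift 0) (h *: 1) - g 0)).
    apply/funext => s /=.
    by rewrite /g /= scale0r add0r addr0 [s%:A]mulr1.
  by rewrite /derive E.
have pos s : - x 0 i < s -> positive_point (s *: v + x).
  move=> hs k; rewrite /v !mxE /=; case: (eqVneq k i) => [->|ik].
    by rewrite ?eqxx ?mulr1 /=; lra.
  by rewrite ?(negbTE ik) /= ?mulr0 ?add0r.
have xi := px i.
have hd : is_derive (0:R) (1:R) g 0.
  apply: (@derive1_at_min R g (- x 0 i) (x 0 i) 0).
- lra.
- move=> t; rewrite in_itv /= => /andP[t1 t2]; apply: der_sig; apply: pos.
  by [].
- by rewrite in_itv /=; apply/andP; split; lra.
- move=> t; rewrite in_itv /= => /andP[t1 t2].
  by rewrite /g scale0r add0r; apply: hmin; apply: pos.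
by case: hd.
Qed.

End Der.


Lemma proj_exists (R : realFieldType) (m n : nat) (D : 'M[R]_(m, n)) (y : 'rV[R]_n) :
  exists u : 'rV[R]_m, (y - u *m D) *m D^T = 0.
Proof.
pose G := D *m D^T.
have kerG : forall v : 'rV[R]_m, v *m G = 0 -> v *m D = 0.
  move=> v vG; set w := v *m D.
  have ww : w *m w^T = 0 by rewrite /w trmx_mul mulmxA -(mulmxA v) -/G vG mul0mx.
  have : (w *m w^T) ord0 ord0 = 0 by rewrite ww mxE.
  rewrite mxE => /eqP; rewrite psumr_eq0; last first.
    by move=> k _; rewrite !mxE -expr2 sqr_ge0.
  move=> /allP Hall; apply/rowP => k; rewrite mxE.
  have /implyP := Hall k (mem_index_enum _); rewrite !mxE => /(_ isT).
  by rewrite mulf_eq0 orbb => /eqP.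
have sK : (kermx G <= kermx D)%MS.
  apply/row_subP => i; apply/sub_kermxP; apply: kerG.
  by rewrite -row_mul mulmx_ker row0.
have rk : (\rank D <= \rank G)%N.
  have := mxrankS sK; rewrite !mxrank_ker.
  have := rank_leq_row G; have := rank_leq_row D; lia.
have sub : (D^T <= G)%MS.
  have := (mxrank_leqif_sup (submxMl D D^T)).2.
  rewrite -/G; move=> <-; rewrite eqn_leq mxrank_tr rk andbT.
  by have := mxrankS (submxMl D D^T); rewrite mxrank_tr.
have /submxP [u yu] := submx_trans (submxMl y D^T) sub.
by exists u; rewrite mulmxBl yu /G mulmxA subrr.
Qed.


Lemma argmax (R : realType) (T : eqType) (s : seq T) (F : T -> R) : s != [::] ->
  exists2 a, a \in s & forall x, x \in s -> F x <= F a.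
Proof.
elim: s => // a s IH _; case: (eqVneq s [::]) => [->|sne].
  by exists a => [|x]; rewrite ?mem_head // inE => /eqP->.
have [a' a's Ha'] := IH sne.
have [le|lt] := leP (F a) (F a').
  exists a' => [|x]; first by rewrite inE a's orbT.
  by rewrite inE => /orP[/eqP->|/Ha'].
exists a => [|x]; first by rewrite mem_head.
by rewrite inE => /orP[/eqP->//|/Ha' /le_trans]; apply; apply: ltW.
Qed.

Lemma pick_sum (V : zmodType) (T : eqType) (s : seq T) (a : T) (F : T -> V) :
  uniq s -> a \in s -> \sum_(x <- s) (if x == a then F x else 0) = F a.
Proof.
move=> us aS; rewrite (bigD1_seq a) //= eqxx big1 ?addr0 // => x /negbTE ->.
by [].
Qed.

Section Main.
Variables (R : realType) (n : nat) (Ap Am : seq 'rV[int]_n)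
  (c : 'rV[int]_n -> R) (h : 'rV[int]_n -> int).
Hypotheses (uA : uniq Ap) (Am0 : Am != [::])
  (rel : forall b, b \in Am -> relint_conv Ap (realvec R b))
  (pc : pos_coeffs Ap Am c) (lf : lifts Ap Am h).

Local Notation rv a := (realvec R a).
Implicit Types (y x p : 'rV[R]_n).

Definition Pos y := \sum_(a <- Ap) c a * expR (dotr (rv a) y).
Definition Neg (t : R) y := \sum_(b <- Am) c b * t ^ h b * expR (dotr (rv b) y).

Lemma sig_ex t y : signomial Ap Am (star_pow c t h) (ex y) = Pos y - Neg t y.
Proof.
rewrite /signomial /Pos /Neg; congr (_ - _); apply: eq_big_seq => a aA.
  by rewrite /star_pow monom_ex lf.2 // expr0z mulr1.
by rewrite /star_pow monom_ex.
Qed.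

Lemma cA a : a \in Ap -> 0 < c a.
Proof. by move=> aA; apply: pc; rewrite mem_cat aA. Qed.
Lemma cB b : b \in Am -> 0 < c b.
Proof. by move=> bA; apply: pc; rewrite mem_cat bA orbT. Qed.

Definition hn b := `|h b|%N.
Lemma hnE b (t : R) : b \in Am -> t ^ h b = t ^+ hn b.
Proof. by move=> bA; rewrite /hn -[in LHS](gtz0_abs (lf.1 b bA)). Qed.
Lemma hn_gt0 b : b \in Am -> (0 < hn b)%N.
Proof. by move=> bA; rewrite /hn absz_gt0 gt_eqF // lf.1. Qed.
Definition H := (\max_(b <- Am) hn b)%N.
Lemma hn_le b : b \in Am -> (hn b <= H)%N.
Proof. by move=> bA; apply: leq_bigmax_seq. Qed.

Lemma Ap_ne : Ap != [::].
Proof.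
case: Am Am0 rel => // b s _ /(_ b (mem_head _ _)) [[lam [_ [+ _]]] _].
by case: Ap => //; rewrite big_nil => /esym/eqP; rewrite oner_eq0.
Qed.

Lemma psum_gt0 (T : eqType) (s : seq T) (F : T -> R) :
  s != [::] -> (forall i, i \in s -> 0 < F i) -> 0 < \sum_(i <- s) F i.
Proof.
case: s => // a s _ HF; rewrite big_cons.
have h1 : 0 < F a by apply: HF; rewrite mem_head.
have h2 : 0 <= \sum_(i <- s) F i.
  by rewrite big_seq; apply: sumr_ge0 => i iS; apply/ltW/HF; rewrite inE iS orbT.
lra.
Qed.

Lemma Pos_gt0 y : 0 < Pos y.
Proof.
apply: psum_gt0 Ap_ne _ => a aA; apply: mulr_gt0; [exact: cA | exact: expR_gt0].
Qed.

Lemma Neg_gt0 t y : 0 < t -> 0 < Neg t y.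
Proof.
move=> t0; apply: psum_gt0 Am0 _ => b bA; rewrite hnE //.
by apply: mulr_gt0; [apply: mulr_gt0; [exact: cB | exact: exprn_gt0] | exact: expR_gt0].
Qed.

Lemma Neg_lt t t' y : 0 < t -> t < t' -> Neg t y < Neg t' y.
Proof.
move=> t0 tt; rewrite /Neg big_seq [X in _ < X]big_seq; apply: ltr_sum.
  by case: Am Am0 => // b s _ /=; rewrite mem_head.
move=> b bA; rewrite !hnE // ltr_pM2r ?expR_gt0 // ltr_pM2l ?cB //.
by rewrite ltrXn2r ?ltW // -lt0n hn_gt0.
Qed.

Lemma Neg_le t t' y : 0 < t -> t <= t' -> Neg t y <= Neg t' y.
Proof.
move=> t0; rewrite le_eqVlt => /orP[/eqP-> //|tt]; exact/ltW/Neg_lt.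
Qed.

Lemma Neg_scale t r y : 0 < t -> 1 <= r -> Neg (r * t) y <= r ^+ H * Neg t y.
Proof.
move=> t0 r1; rewrite /Neg mulr_sumr big_seq [X in _ <= X]big_seq.
apply: ler_sum => b bA; rewrite !hnE // exprMn.
have hk : r ^+ hn b <= r ^+ H by apply: ler_weXn2l => //; exact: hn_le.
have hQ : 0 <= c b * t ^+ hn b * expR (dotr (rv b) y).
  by rewrite ltW // mulr_gt0 ?expR_gt0 // mulr_gt0 ?cB // exprn_gt0.
have -> : c b * (r ^+ hn b * t ^+ hn b) * expR (dotr (rv b) y) =
  r ^+ hn b * (c b * t ^+ hn b * expR (dotr (rv b) y)) by ring.
exact: ler_wpM2r.
Qed.


Definition a0 := nth 0 Ap 0.
Lemma a0_in : a0 \in Ap.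
Proof. by apply: mem_nth; case: Ap Ap_ne. Qed.

Definition D : 'M[R]_(size Ap, n) :=
  \matrix_(j, k) (rv (nth 0 Ap j) - rv a0) ord0 k.
Lemma rowD j : row j D = rv (nth 0 Ap j) - rv a0.
Proof. by apply/rowP => k; rewrite !mxE. Qed.

Lemma aff_step p a a' k : aff_hull Ap p -> a \in Ap -> a' \in Ap ->
  aff_hull Ap (p + k *: (rv a - rv a')).
Proof.
move=> [lam [s1 ->]] aA a'A.
exists (fun e : 'rV[int]_n => lam e + (if e == a then k else 0) - (if e == a' then k else 0)).
have E (b : 'rV[int]_n) : \sum_(e <- Ap) (if e == b then k else 0) *: rv e =
    \sum_(e <- Ap) (if e == b then k *: rv e else 0).
  by apply: eq_bigr => e _; case: eqP => _ //; rewrite scale0r.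
split.
  by rewrite sumrB big_split /= s1 (pick_sum (fun _ => k)) // (pick_sum (fun _ => k)) // addrK.
apply/esym; under eq_bigr do rewrite scalerBl scalerDl.
by rewrite sumrB big_split /= E E !pick_sum // scalerBr addrA.
Qed.

Lemma aff_sumD p (w : 'rV[R]_(size Ap)) : aff_hull Ap p ->
  aff_hull Ap (p + \sum_j w 0 j *: row j D).
Proof.
move=> pA; elim/big_rec: _ => [|j q _ Hq]; first by rewrite addr0.
have -> : p + (w 0 j *: row j D + q) = (p + q) + w 0 j *: row j D.
  by rewrite addrCA addrC.
by rewrite rowD; apply: aff_step Hq _ a0_in; apply: mem_nth.
Qed.

Lemma conv_aff p : conv_hull Ap p -> aff_hull Ap p.
Proof. by move=> [lam [_ [s1 e]]]; exists lam. Qed.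

Lemma shift_lemma y : exists y' k, (exists u : 'rV[R]_(size Ap), y' = u *m D) /\
  (forall a, a \in Ap ++ Am -> dotr (rv a) y = dotr (rv a) y' + k).
Proof.
have [u Hu] := proj_exists D y.
set w := y - u *m D.
have wD j : dotr (row j D) w = 0.
  have : (w *m D^T) 0 j = 0 by rewrite Hu mxE.
  by rewrite mxE => <-; apply: eq_bigr => k _; rewrite !mxE mulrC.
have HA a : a \in Ap -> dotr (rv a) w = dotr (rv a0) w.
  move=> aA; have jlt : (index a Ap < size Ap)%N by rewrite index_mem.
  have := wD (Ordinal jlt); rewrite rowD /= nth_index // dotrBl => /eqP.
  by rewrite subr_eq0 => /eqP.
have HB b : b \in Am -> dotr (rv b) w = dotr (rv a0) w.
  move=> /rel [[lam [l0 [s1 ->]]] _]; rewrite dotr_suml.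
  under eq_big_seq => a aA do rewrite dotrZl HA //.
  by rewrite -mulr_suml s1 mul1r.
exists (u *m D), (dotr (rv a0) w); split; first by exists u.
move=> a; rewrite mem_cat => Ha.
rewrite -{1}(subrK (u *m D) y) -/w dotrDr addrC.
by case/orP: Ha => [/HA|/HB] ->.
Qed.

Lemma uniform_eps : exists2 eps : R, 0 < eps & forall b, b \in Am ->
  forall z, aff_hull Ap z -> `|z - rv b| < eps -> conv_hull Ap z.
Proof.
have : forall b, b \in Am -> b \in Am by [].
elim: {-2}Am => [|b s IH] sub.
  by exists 1 => // b.
have [e1 e1p He1] : exists2 eps : R, 0 < eps & forall b, b \in s ->
    forall z, aff_hull Ap z -> `|z - rv b| < eps -> conv_hull Ap z.
  by apply: IH => e es; apply: sub; rewrite inE es orbT.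
have [_ [e2 e2p He2]] := rel (sub b (mem_head _ _)).
exists (Num.min e1 e2); first by rewrite lt_min e1p e2p.
move=> x; rewrite inE => /orP[/eqP->|xs] z zA; rewrite lt_min => /andP[h1 h2].
  exact: He2.
exact: He1 xs z zA h1.
Qed.

Lemma conv_le p y M : conv_hull Ap p ->
  (forall a, a \in Ap -> dotr (rv a) y <= M) -> dotr p y <= M.
Proof.
move=> [lam [l0 [s1 ->]]] HM; rewrite dotr_suml.
under eq_bigr do rewrite dotrZl.
apply: (@le_trans _ _ (\sum_(a <- Ap) lam a * M)).
  by rewrite big_seq [X in _ <= X]big_seq; apply: ler_sum => a aA; apply: ler_wpM2l; [exact: l0|exact: HM].
by rewrite -mulr_suml s1 mul1r.
Qed.

Lemma coercive eps : 0 < eps -> (forall b, b \in Am -> forall z, aff_hull Ap z ->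
    `|z - rv b| < eps -> conv_hull Ap z) ->
  forall u : 'rV[R]_(size Ap), exists2 a, a \in Ap & forall b, b \in Am ->
    dotr (rv b) (u *m D) + eps / 2 * `|u *m D| <= dotr (rv a) (u *m D).
Proof.
move=> e0 He u; set y := u *m D.
have [a aA Ha] := argmax (fun a => dotr (rv a) y) Ap_ne.
exists a => // b bA.
have bconv := (rel bA).1.
have [y0|yn0] := eqVneq y 0.
  by rewrite y0 normr0 mulr0 addr0 !dotr0r.
have ny : 0 < `|y| by rewrite normr_gt0.
pose s := eps / 2 / `|y|.
have s0 : 0 < s by rewrite /s divr_gt0 // divr_gt0.
pose z := rv b + s *: y.
have zaff : aff_hull Ap z.
  have := aff_sumD (s *: u) (conv_aff bconv).
  by rewrite -mulmx_sum_row -scalemxAl.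
have zc : conv_hull Ap z.
  apply: (He b bA z zaff); rewrite /z addrC addKr normrZ gtr0_norm // /s.
  rewrite divfK ?gt_eqF //; lra.
have := conv_le zc Ha.
rewrite /z dotrDl dotrZl.
have := dotr_self y.
have -> : eps / 2 * `|y| = s * `|y| ^+ 2 by rewrite /s expr2 mulrA divfK ?gt_eqF.
nra.
Qed.


Lemma sum_ge_term (T : eqType) (s : seq T) (F : T -> R) (a : T) :
  a \in s -> (forall i, i \in s -> 0 <= F i) -> F a <= \sum_(i <- s) F i.
Proof.
elim: s => // b s IH; rewrite inE => /orP[/eqP->|aS] HF; rewrite big_cons.
  rewrite lerDl big_seq; apply: sumr_ge0 => i iS; apply: HF.
  by rewrite inE iS orbT.
have h1 : 0 <= F b by apply: HF; rewrite mem_head.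
have : F a <= \sum_(i <- s) F i.
  by apply: IH => // i iS; apply: HF; rewrite inE iS orbT.
lra.
Qed.

Definition C t := Neg t 0.

Lemma Neg_coer t y a e : 0 < t -> a \in Ap ->
  (forall b, b \in Am -> dotr (rv b) y + e * `|y| <= dotr (rv a) y) ->
  Neg t y <= C t * expR (- (e * `|y|)) * expR (dotr (rv a) y).
Proof.
move=> t0 aA ha; rewrite /C /Neg !mulr_suml big_seq [X in _ <= X]big_seq.
apply: ler_sum => b bA; rewrite dotr0r expR0 mulr1 -!mulrA hnE //.
apply: ler_wpM2l; first by rewrite ltW ?cB.
apply: ler_wpM2l; first by rewrite exprn_ge0 // ltW.
by rewrite -expRD ler_expR; have := ha b bA; lra.
Qed.

Lemma Pos_ge a y : a \in Ap -> c a * expR (dotr (rv a) y) <= Pos y.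
Proof.
move=> aA; rewrite /Pos; apply: (@sum_ge_term _ Ap (fun a => c a * expR (dotr (rv a) y)) a aA) => i iA.
by rewrite ltW // mulr_gt0 ?cA // expR_gt0.
Qed.

Lemma Neg_lt_Pos t y a e cm : 0 < t -> a \in Ap ->
  (forall b, b \in Am -> dotr (rv b) y + e * `|y| <= dotr (rv a) y) ->
  cm <= c a -> C t * expR (- (e * `|y|)) < cm -> Neg t y < Pos y.
Proof.
move=> t0 aA ha cma lt.
apply: (le_lt_trans (Neg_coer t0 aA ha)).
apply: (lt_le_trans _ (Pos_ge y aA)).
rewrite ltr_pM2r ?expR_gt0 //; exact: lt_le_trans cma.
Qed.

Lemma reduce : exists2 e : R, 0 < e & forall y, exists y' k,
  Pos y = expR k * Pos y' /\ (forall t, Neg t y = expR k * Neg t y') /\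
  exists2 a, a \in Ap & forall b, b \in Am -> dotr (rv b) y' + e * `|y'| <= dotr (rv a) y'.
Proof.
have [eps e0 He] := uniform_eps.
exists (eps / 2); first by rewrite divr_gt0.
move=> y; have [y' [k [[u ->] Hs]]] := shift_lemma y.
exists (u *m D), k; split; [|split].
- rewrite /Pos mulr_sumr; apply: eq_big_seq => a aA.
  by rewrite Hs ?mem_cat ?aA // expRD; ring.
- move=> t; rewrite /Neg mulr_sumr; apply: eq_big_seq => b bA.
  by rewrite Hs ?mem_cat ?bA ?orbT // expRD; ring.
- exact: coercive.
Qed.

Lemma C_small t : 0 < t -> t <= 1 -> C t <= t * C 1.
Proof.
move=> t0 t1; rewrite /C /Neg mulr_sumr big_seq [X in _ <= X]big_seq.
apply: ler_sum => b bA; rewrite !hnE // expr1n mulr1.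
have : (0 < hn b)%N by exact: hn_gt0.
case: (hn b) => // k _; rewrite exprS.
have h1 : t ^+ k <= 1 by rewrite exprn_ile1 // ltW.
have h2 : 0 < c b by exact: cB.
have h3 : 0 <= t ^+ k by rewrite exprn_ge0 // ltW.
set E := expR (dotr (rv b) 0).
have h4 : 0 < E by exact: expR_gt0.
have -> : c b * (t * t ^+ k) * E = (c b * E * t) * t ^+ k by ring.
have -> : t * (c b * E) = (c b * E * t) * 1 by ring.
by apply: ler_wpM2l => //; rewrite ltW // !mulr_gt0.
Qed.

Lemma coord_le_norm y i : `|y ord0 i| <= `|y|.
Proof.
have -> : `|y| = mx_norm y by [].
rewrite mx_normrE; apply/bigmax_geP; right => /=.
by exists (ord0, i).
Qed.

Lemma cont_sum (T : topologicalType) (I : Type) (r : seq I) (F : I -> T -> R) :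
  (forall i, continuous (F i)) -> continuous (fun w => \sum_(i <- r) F i w).
Proof.
move=> HF; elim: r => [|a r IH].
  under eq_fun do rewrite big_nil; exact: cst_continuous.
under eq_fun do rewrite big_cons.
by move=> w; apply: continuousD; [exact: HF | exact: IH].
Qed.

Lemma cont_dotr p : continuous (fun y : 'rV[R]_n => dotr p y).
Proof.
apply: cont_sum => k y; apply: continuousM; first exact: cst_continuous.
exact: coord_continuous.
Qed.

Lemma cont_Pos : continuous Pos.
Proof.
apply: cont_sum => a y.
apply: (@continuousM _ _ (fun=> c a) (fun w => expR (dotr (rv a) w))).
  exact: cst_continuous.
apply: continuous_comp; [exact: cont_dotr | exact: continuous_expR].
Qed.

Lemma cont_Neg t : continuous (Neg t).
Proof.
apply: cont_sum => a y.
apply: (@continuousM _ _ (fun=> c a * t ^ h a) (fun w => expR (dotr (rv a) w))).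
  exact: cst_continuous.
apply: continuous_comp; [exact: cont_dotr | exact: continuous_expR].
Qed.

Lemma pow_le (d : R) (k : nat) : 0 <= d -> d <= 1 -> (1 + d) ^+ k <= 1 + d * (2 ^+ k - 1).
Proof.
move=> d0 d1; elim: k => [|k IH]; first by rewrite !expr0 subrr mulr0 addr0.
rewrite !exprS.
have hK : 1 <= 2 ^+ k :> R by apply: exprn_ege1; lra.
set X := (1 + d) ^+ k in IH *; set K := 2 ^+ k in hK *.
have a1 : (1 + d) * X <= (1 + d) * (1 + d * (K - 1)) by apply: ler_wpM2l => //; lra.
have a2 : d * (K - 1) * d <= d * (K - 1) * 1.
  by apply: ler_wpM2l => //; apply: mulr_ge0 => //; lra.
nra.
Qed.


Lemma sig_gt0_iff t x : positive_point x ->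
  (0 < signomial Ap Am (star_pow c t h) x) = (Neg t (lnv x) < Pos (lnv x)).
Proof. by move=> px; rewrite -{1}(ex_lnv px) sig_ex subr_gt0. Qed.

Lemma main_result : exists t0 xs, 0 < t0 /\ positive_point xs /\
  critical_zero Ap Am (star_pow c t0 h) xs /\
  (forall t, 0 < t -> t < t0 -> forall y, Neg t y < Pos y) /\
  (forall y, Neg t0 y <= Pos y) /\ Neg t0 (lnv xs) = Pos (lnv xs).
Proof.
have [e e0 red] := reduce.
have [amin aminA Hamin] := argmax (fun a => - c a) Ap_ne.
set cm := c amin.
have cm0 : 0 < cm by exact: cA.
have Hcm a : a \in Ap -> cm <= c a by move=> aA; have := Hamin a aA; rewrite lerN2.
pose Cop t := forall y, Neg t y <= Pos y.
have transfer t : 0 < t -> (forall y' a, a \in Ap ->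
    (forall b, b \in Am -> dotr (rv b) y' + e * `|y'| <= dotr (rv a) y') ->
    Neg t y' <= Pos y') -> Cop t.
  move=> t0 Hy y; have [y' [k [-> [-> [a aA ha]]]]] := red y.
  by apply: ler_wpM2l; [exact: expR_ge0 | exact: Hy ha].
have C1 : 0 < C 1 by exact: Neg_gt0.
pose t1 := Num.min 1 (cm / (2 * C 1)).
have t1p : 0 < t1 by rewrite lt_min ltr01 /= divr_gt0 // mulr_gt0.
have t1le : t1 <= 1 by rewrite ge_min lexx.
have Ct1 : C t1 < cm.
  have := C_small t1p t1le.
  have : t1 <= cm / (2 * C 1) by rewrite ge_min lexx orbT.
  rewrite ler_pdivlMr ?mulr_gt0 //.
  have : 0 < C 1 by [].
  nra.
have cop1 : Cop t1.
  apply: transfer => // y' a aA ha; apply/ltW/(Neg_lt_Pos t1p aA ha (Hcm a aA)).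
  have : expR (- (e * `|y'|)) <= 1.
    by rewrite expR_le1 oppr_le0 mulr_ge0 // ltW.
  have : 0 < C t1 by exact: Neg_gt0.
  nra.
have [b0 b0A] : exists b0, b0 \in Am by case: Am Am0 => // b s _; exists b; rewrite mem_head.
pose T0 := Num.max 1 (Pos 0 / c b0).
have ub t : 0 < t -> Cop t -> t <= T0.
  move=> tp ct; rewrite le_max; case: (leP t 1) => //= t1' .
  have cb0 := cB b0A.
  rewrite ler_pdivlMr //.
  apply: le_trans (ct 0).
  have : c b0 * t ^ h b0 * expR (dotr (rv b0) 0) <= Neg t 0.
    apply: (@sum_ge_term _ Am (fun b => c b * t ^ h b * expR (dotr (rv b) 0)) b0 b0A).
    by move=> b bA; rewrite hnE // ltW // !mulr_gt0 ?cB ?exprn_gt0 ?expR_gt0.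
  rewrite dotr0r expR0 mulr1 hnE //.
  have : t <= t ^+ hn b0 by rewrite ler_eXnr ?hn_gt0 // ltW.
  nra.
pose Sset := [set t : R | 0 < t /\ Cop t].
have hs : has_sup Sset.
  split; first by exists t1.
  by exists T0 => t [tp ct]; exact: ub.
set t0 := sup Sset.
have t1t0 : t1 <= t0 by apply: sup_upper_bound.
have t0p : 0 < t0 by exact: lt_le_trans t1p t1t0.
have below t : 0 < t -> t < t0 -> forall y, Neg t y < Pos y.
  move=> tp tt y.
  have tt' : 0 < t0 - t by rewrite subr_gt0.
  have [e' [e'p ce'] lte'] := sup_adherent tt' hs.
  apply: lt_le_trans (ce' y); apply: Neg_lt => //.
  by move: lte'; rewrite opprB addrCA subrr addr0.
have K1 : 1 <= (2:R) ^+ H by apply: exprn_ege1; lra.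
have copt0 : Cop t0.
  move=> y; rewrite leNgt; apply/negP => lt.
  set P := Pos y in lt *; set N := Neg t0 y in lt *.
  have Pp : 0 < P := Pos_gt0 y.
  pose d := Num.min 1 ((N - P) / (P * 2 ^+ H)).
  have d0 : 0 < d.
    by rewrite lt_min ltr01 /= divr_gt0 ?subr_gt0 // mulr_gt0 //; lra.
  have d1 : d <= 1 by rewrite ge_min lexx.
  have dK : d * (P * 2 ^+ H) <= N - P.
    have : d <= (N - P) / (P * 2 ^+ H) by rewrite ge_min lexx orbT.
    by rewrite ler_pdivlMr // mulr_gt0 //; lra.
  pose t := t0 / (1 + d).
  have tp : 0 < t by rewrite divr_gt0 //; lra.
  have tt : t < t0 by rewrite ltr_pdivrMr; [nra | lra].
  have e1 : N <= (1 + d) ^+ H * Neg t y.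
    have := @Neg_scale t (1 + d) y tp (ltac:(lra)).
    by have -> : (1 + d) * t = t0 by rewrite /t mulrC divfK // gt_eqF //; lra.
  have e2 := @pow_le d H (ltW d0) d1.
  have e3 := below t tp tt y.
  have Ntp : 0 < Neg t y by exact: Neg_gt0.
  have e4 : (1 + d) ^+ H * Neg t y <= (1 + d * (2 ^+ H - 1)) * Neg t y.
    by apply: ler_wpM2r => //; exact: ltW.
  have e5 : (1 + d * (2 ^+ H - 1)) * Neg t y < (1 + d * (2 ^+ H - 1)) * P.
    by rewrite ltr_pM2l //; nra.
  nra.
pose C2 := C (2 * t0).
have C2p : 0 < C2 by apply: Neg_gt0; rewrite mulr_gt0.
pose rho := C2 / (cm * e).
have rhop : 0 < rho by rewrite divr_gt0 // mulr_gt0.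
pose K := [set y : 'rV[R]_n | forall i, (`[- rho, rho]%classic : set R) (y ord0 i)].
have Kc : compact K.
  exact: (@rV_compact _ n (fun=> `[- rho, rho]%classic) (fun=> @segment_compact R _ _)).
have K0 : K !=set0.
  by exists 0 => i; rewrite /= mxE in_itv /=; apply/andP; split; lra.
pose g := fun y => Neg t0 y / Pos y.
have gc : {within K, continuous g}.
  apply: continuous_subspaceT => y.
  apply: (@continuousM _ _ (Neg t0) (fun w => (Pos w)^-1)); first exact: cont_Neg.
  apply: continuousV; first by rewrite gt_eqF // Pos_gt0.
  exact: cont_Pos.
have [ys ysK ymax] := compact_EVT_max K0 Kc gc.
have gle y : g y <= 1 by rewrite /g ler_pdivrMr ?Pos_gt0 // mul1r; exact: copt0.
have gge y : 0 <= g y.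
  by rewrite /g divr_ge0 // ltW // ?Pos_gt0 // Neg_gt0.
have M1 : 1 <= g ys.
  rewrite leNgt; apply/negP => M0lt.
  set M0 := g ys in M0lt ymax.
  have M00 : 0 <= M0 by exact: gge.
  have K0' : 0 < (2:R) ^+ H by lra.
  pose d := Num.min 1 ((1 - M0) / 2 ^+ H).
  have d0 : 0 < d by rewrite lt_min ltr01 /= divr_gt0 // subr_gt0.
  have d1 : d <= 1 by rewrite ge_min lexx.
  have dK : d * 2 ^+ H <= 1 - M0.
    have : d <= (1 - M0) / 2 ^+ H by rewrite ge_min lexx orbT.
    by rewrite ler_pdivlMr.
  pose t' := (1 + d) * t0.
  have t'p : 0 < t' by rewrite mulr_gt0 //; lra.
  have t't0 : t0 < t' by rewrite /t'; nra.
  have t'2 : t' <= 2 * t0 by rewrite /t'; nra.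
  have : Cop t'.
    apply: transfer => // y' a aA ha.
    case: (boolP [forall i, `|y' ord0 i| <= rho]) => [/forallP inK | /forallPn [i]].
    - have y'K : y' \in K.
        by apply: mem_set => i; rewrite /= in_itv /= -ler_norml; exact: inK.
      have := ymax y' y'K; rewrite /g ler_pdivrMr ?Pos_gt0 // => hN.
      have hs' := @Neg_scale t0 (1 + d) y' t0p (ltac:(lra)).
      have e2 := @pow_le d H (ltW d0) d1.
      have Pp : 0 < Pos y' := Pos_gt0 y'.
      have Np : 0 < Neg t0 y' := Neg_gt0 y' t0p.
      have hp : 0 <= (1 + d) ^+ H by rewrite exprn_ge0 //; lra.
      have f1 : (1 + d) ^+ H * Neg t0 y' <= (1 + d * (2 ^+ H - 1)) * Neg t0 y'.
        by apply: ler_wpM2r => //; exact: ltW.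
      have f2 : (1 + d * (2 ^+ H - 1)) * Neg t0 y' <= (1 + d * (2 ^+ H - 1)) * (M0 * Pos y').
        by apply: ler_wpM2l => //; nra.
      have f3 : (1 + d * (2 ^+ H - 1)) * M0 <= 1 by nra.
      have f4 : (1 + d * (2 ^+ H - 1)) * (M0 * Pos y') <= Pos y'.
        by rewrite mulrA -[X in _ <= X]mul1r ler_wpM2r // ltW.
      rewrite /t'; lra.
    - rewrite -ltNge => hi.
      apply/ltW/(Neg_lt_Pos t'p aA ha (Hcm a aA)).
      have nr : rho < `|y'| := lt_le_trans hi (coord_le_norm y' i).
      have Cle : C t' <= C2 by apply: Neg_le.
      have ex1 := expR_ge1Dx (e * `|y'|).
      have Cp : 0 < C t' by exact: Neg_gt0.
      have hC2 : C2 = rho * (cm * e) by rewrite /rho divfK // gt_eqF // mulr_gt0.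
      have s1 : rho * (cm * e) < `|y'| * (cm * e) by rewrite ltr_pM2r // mulr_gt0.
      have s2 : cm * (1 + e * `|y'|) <= cm * expR (e * `|y'|).
        by apply: ler_wpM2l => //; exact: ltW.
      have : C2 < cm * expR (e * `|y'|) by rewrite hC2; nra.
      rewrite expRN -[_ * _^-1]/(_ / _) ltr_pdivrMr ?expR_gt0 //.
      by move=> h2; exact: le_lt_trans Cle h2.
  move=> ct'; have := sup_upper_bound hs (conj t'p ct') : t' <= t0.
  lra.
have eqs : Neg t0 ys = Pos ys.
  apply/eqP; rewrite eq_le copt0 /=.
  by move: M1; rewrite /g ler_pdivlMr ?Pos_gt0 // mul1r.
have lnex : lnv (ex ys) = ys by apply/rowP => k; rewrite !mxE expRK.
exists t0, (ex ys); split => //; split; first exact: ex_pos.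
split; last by split => //; split => //; rewrite lnex.
split; first by rewrite sig_ex eqs subrr.
move=> i; rewrite crit_min ?mulr0 //; first exact: ex_pos.
move=> z pz; rewrite sig_ex eqs subrr -(ex_lnv pz) sig_ex subr_ge0.
exact: copt0.
Qed.
End Main.

Unset Implicit Arguments.
Set Strict Implicit.

Theorem corollary2p8 (R : realType) (n : nat)
    (Ap Am : seq 'rV[int]_n) (c : 'rV[int]_n -> R) (h : 'rV[int]_n -> int) :
  uniq Ap -> uniq Am -> (forall a, a \in Ap -> a \notin Am) ->
  Am != [::] ->
  (forall b, b \in Am -> relint_conv Ap (realvec R b)) ->
  pos_coeffs Ap Am c ->
  lifts Ap Am h ->
  let S := [set t : R | 0 < t /\ exists x : 'rV[R]_n,
              positive_point x /\ critical_zero Ap Am (star_pow c t h) x] in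
  exists tstar : R,
    S tstar /\ (forall t, S t -> tstar <= t) /\
    (copositive Ap Am c <-> 1 <= tstar).
Proof.
move=> uA uB dis Am0 rel pc lf S.
have [t0 [xs [t0p [pxs [crit [below [cop eqs]]]]]]] := main_result uA Am0 rel pc lf.
have c1 : c = star_pow c 1 h by apply/funext => a; rewrite /star_pow exp1rz mulr1.
exists t0; split; first by split => //; exists xs.
split.
  move=> t [tp [x [px [fx _]]]]; rewrite leNgt; apply/negP => tt.
  have := below t tp tt (lnv x).
  have := sig_ex c lf t (lnv x); rewrite ex_lnv // fx.
  lra.
split.
  move=> cp; rewrite leNgt; apply/negP => t01.
  have := Neg_lt Am0 pc lf (lnv xs) t0p t01.
  have h1 : 0 <= signomial Ap Am (star_pow c 1 h) (ex (lnv xs)).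
    by rewrite ex_lnv // -c1; exact: cp.
  rewrite (sig_ex c lf) in h1.
  lra.
move=> t1 x px; rewrite c1 -(ex_lnv px) (sig_ex c lf) subr_ge0.
apply: le_trans (cop (lnv x)); exact: (Neg_le Am0 pc lf _ ltr01 t1).
Qed.
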